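(* Let $E$ be a set and $T$ a set of infinitary propositional formulae over $E$, and let $C$ be the set of models of $T$. (a) If every formula of $T$ is a clause $\bigwedge X\Rightarrow\bigvee Y$ with $X\neq\emptyset$, then $(E,C)$ is rooted. (b) If every formula is a clause $\bigwedge X\Rightarrow\bigvee Y$ with $|X|=1$ or $Y=\emptyset$, then $C$ is closed under bounded unions. (c) If every formula is a clause with $|Y|\le1$, then $C$ is closed under nonempty intersections. (d) If every formula has the form $\bigwedge X\Rightarrow\big((\bigvee_{j\in J}\bigwedge Y_j)\wedge\bigwedge_{j,k\in J,j\ne k}\neg(\bigwedge Y_j\wedge\bigwedge Y_k)\big)$ with $X,Y_j\subseteq E$, then $C$ is closed under bounded nonempty intersections. (e) If every formula is a clause with $X$ finite, then $(E,C)$ has finite conflict. (f) If every formula is a clause with $|X|\le 2$, then $(E,C)$ has binary conflict. (g) If every formula is a clause with $|X|=1$, or with $X$ finite and $Y=\emptyset$, then $C$ is closed under finitely consistent unions. (h) If every formula is a clause with $|X|=1$, or with $|X|\le2$ and $Y=\emptyset$, then $C$ is closed under pairwise consistent unions. (i) If every formula has the form $\bigwedge X\Rightarrow\big((\bigvee_{j\in J}\bigwedge Y_j)\wedge\bigwedge_{j,k\in J,j\ne k}\neg(\bigwedge Z_{j,k}\wedge\bigwedge Z_{k,j})\big)$ with $X$ finite, $Y_j\subseteq E$, and each $Z_{j,k}$ a finite subset of $Y_j$, then $C$ is closed under finitely consistent nonempty intersections. (j) If every formula has the form $\big(\bigwedge X\Rightarrow\bigvee_{j\in J}\bigwedge Y_j\big)\wedge\bigwedge_{j,k\in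 J,j\neq k}\neg(e_{j,k}\wedge e_{k,j})$ with $|X|\le2$, $Y_j\subseteq E$ and $e_{j,k}\in Y_j$, then $C$ is closed under pairwise consistent nonempty intersections.
   Context: A model of $T$ is a subset $m\subseteq E$ (the true variables) making every formula of $T$ true; $\bigwedge$, $\bigvee$ may be infinitary. For a configuration structure $(E,C)$ with $C\subseteq\mathcal{P}(E)$: rooted means $\emptyset\in C$; $X$ is consistent if $X\subseteq z$ for some $z\in C$, finitely consistent if all its finite subsets are consistent, pairwise consistent if all its subsets of size $\le 2$ are consistent. Closed under bounded unions: $A\subseteq C$ and $\bigcup A$ consistent imply $\bigcup A\in C$; nonempty intersections: $\emptyset\ne A\subseteq C$ implies $\bigcap A\in C$; bounded nonempty intersections: $\emptyset\neq A\subseteq C$ with $\bigcup A$ consistent implies $\bigcap A\in C$; finitely (pairwise) consistent unions: $A\subseteq C$ with $\bigcup A$ finitely (pairwise) consistent implies $\bigcup A\in C$; finitely (pairwise) consistent nonempty intersections: $\emptyset\neq A\subseteq C$ with $\bigcup A$ finitely (pairwise) consistent implies $\bigcap A\in C$. $(E,C)$ has finite conflict if every $X\subseteq E$ such that every finite $Y\subseteq X$ satisfies $Y\subseteq z\subseteq X$ for some $z\in C$ lies in $C$; binary conflict: same with ''$|Y|\le2$'' in place of ''finite''. *)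

(* Defs.v *)
From Stdlib Require Import List.

Set Implicit Arguments.

Definition subset {E : Type} (X Y : E -> Prop) : Prop := forall x, X x -> Y x.
Definition finite_set {E : Type} (X : E -> Prop) : Prop :=
  exists l : list E, forall x, X x -> In x l.
Definition card_le2 {E : Type} (X : E -> Prop) : Prop :=
  exists a b : E, forall x, X x -> x = a \/ x = b.
Definition card_eq1 {E : Type} (X : E -> Prop) : Prop :=
  exists a : E, forall x, X x <-> x = a.
Definition nonempty_set {E : Type} (X : E -> Prop) : Prop := exists x, X x.
Definition empty_set {E : Type} (X : E -> Prop) : Prop := forall x, ~ X x.

Inductive form (E : Type) : Type :=
  | Var : E -> form E
  | Neg : form E -> form E
  | And2 : form E -> form E -> form E
  | Imp : form E -> form E -> form E
  | BigAnd : forall I : Type, (I -> form E) -> form E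
  | BigOr : forall I : Type, (I -> form E) -> form E.

Arguments Var {E}.
Arguments BigAnd {E} I.
Arguments BigOr {E} I.

Fixpoint sat {E : Type} (m : E -> Prop) (f : form E) : Prop :=
  match f with
  | Var e => m e
  | Neg g => ~ sat m g
  | And2 g h => sat m g /\ sat m h
  | Imp g h => sat m g -> sat m h
  | @BigAnd _ Ix F => forall i : Ix, sat m (F i)
  | @BigOr _ Ix F => exists i : Ix, sat m (F i)
  end.

Definition andset {E : Type} (X : E -> Prop) : form E :=
  BigAnd {x : E | X x} (fun x => Var (proj1_sig x)).
Definition orset {E : Type} (Y : E -> Prop) : form E :=
  BigOr {y : E | Y y} (fun y => Var (proj1_sig y)).

Definition clause {E : Type} (X Y : E -> Prop) : form E :=
  Imp (andset X) (orset Y).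

Definition model {E : Type} (T : form E -> Prop) (m : E -> Prop) : Prop :=
  forall f, T f -> sat m f.

Definition offdiag (J : Type) : Type := {p : J * J | fst p <> snd p}.

Definition form_d {E : Type} (X : E -> Prop) (J : Type) (Y : J -> E -> Prop)
  : form E :=
  Imp (andset X)
      (And2 (BigOr J (fun j => andset (Y j)))
            (BigAnd (offdiag J) (fun p =>
               Neg (And2 (andset (Y (fst (proj1_sig p))))
                         (andset (Y (snd (proj1_sig p)))))))). 

Definition form_i {E : Type} (X : E -> Prop) (J : Type) (Y : J -> E -> Prop)
  (Z : J -> J -> E -> Prop) : form E :=
  Imp (andset X)
      (And2 (BigOr J (fun j => andset (Y j)))
            (BigAnd (offdiag J) (fun p =>
               Neg (And2 (andset (Z (fst (proj1_sig p)) (snd (proj1_sig p))))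
                         (andset (Z (snd (proj1_sig p)) (fst (proj1_sig p)))))))).

Definition form_j {E : Type} (X : E -> Prop) (J : Type) (Y : J -> E -> Prop)
  (e : J -> J -> E) : form E :=
  And2 (Imp (andset X) (BigOr J (fun j => andset (Y j))))
       (BigAnd (offdiag J) (fun p =>
          Neg (And2 (Var (e (fst (proj1_sig p)) (snd (proj1_sig p))))
                    (Var (e (snd (proj1_sig p)) (fst (proj1_sig p))))))).

Section Config.
Context {E : Type} (C : (E -> Prop) -> Prop).

Definition bigunion (A : (E -> Prop) -> Prop) : E -> Prop :=
  fun x => exists z, A z /\ z x.
Definition bigintersection (A : (E -> Prop) -> Prop) : E -> Prop :=
  fun x => forall z, A z -> z x.
Definition nonempty_family (A : (E -> Prop) -> Prop) : Prop := exists z, A z.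

Definition rooted : Prop := C (fun _ => False).
Definition consistent (X : E -> Prop) : Prop := exists z, C z /\ subset X z.
Definition fin_consistent (X : E -> Prop) : Prop :=
  forall Y, subset Y X -> finite_set Y -> consistent Y.
Definition pair_consistent (X : E -> Prop) : Prop :=
  forall Y, subset Y X -> card_le2 Y -> consistent Y.

Definition closed_bounded_unions : Prop :=
  forall A, subset A C -> consistent (bigunion A) -> C (bigunion A).
Definition closed_nonempty_intersections : Prop :=
  forall A, nonempty_family A -> subset A C -> C (bigintersection A).
Definition closed_bounded_nonempty_intersections : Prop :=
  forall A, nonempty_family A -> subset A C -> consistent (bigunion A) ->
    C (bigintersection A).
Definition closed_fin_consistent_unions : Prop :=
  forall A, subset A C -> fin_consistent (bigunion A) -> C (bigunion A).
Definition closed_pair_consistent_unions : Prop :=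
  forall A, subset A C -> pair_consistent (bigunion A) -> C (bigunion A).
Definition closed_fin_consistent_nonempty_intersections : Prop :=
  forall A, nonempty_family A -> subset A C -> fin_consistent (bigunion A) ->
    C (bigintersection A).
Definition closed_pair_consistent_nonempty_intersections : Prop :=
  forall A, nonempty_family A -> subset A C -> pair_consistent (bigunion A) ->
    C (bigintersection A).

Definition finite_conflict : Prop :=
  forall X : E -> Prop,
    (forall Y, subset Y X -> finite_set Y ->
       exists z, C z /\ subset Y z /\ subset z X) -> C X.
Definition binary_conflict : Prop :=
  forall X : E -> Prop,
    (forall Y, subset Y X -> card_le2 Y ->
       exists z, C z /\ subset Y z /\ subset z X) -> C X.
End Config.

Definition card_le1 {E : Type} (X : E -> Prop) : Prop :=
  forall x y, X x -> X y -> x = y.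

(* Main.v *)
Require Import Defs.
From Stdlib Require Import List Classical.

Lemma sat_andset {E} (m : E -> Prop) X : sat m (andset X) <-> subset X m.
Proof.
  unfold andset, subset; simpl; split.
  - intros H x Hx. exact (H (exist _ x Hx)).
  - intros H [x Hx]; simpl; auto.
Qed.

Lemma sat_orset {E} (m : E -> Prop) Y : sat m (orset Y) <-> exists y, Y y /\ m y.
Proof.
  unfold orset; simpl; split.
  - intros [[y Hy] H]; simpl in *; eauto.
  - intros [y [Hy H]]. exists (exist _ y Hy); auto.
Qed.

Lemma sat_clause {E} (m : E -> Prop) X Y :
  sat m (clause X Y) <-> (subset X m -> exists y, Y y /\ m y).
Proof.
  unfold clause; cbn [sat].
  rewrite sat_andset, sat_orset. tauto.
Qed.

Lemma sat_form_d {E} (m : E -> Prop) X J (Y : J -> E -> Prop) :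
  sat m (form_d X Y) <-> (subset X m -> (exists j, subset (Y j) m) /\
     forall j k, j <> k -> ~ (subset (Y j) m /\ subset (Y k) m)).
Proof.
  unfold form_d. cbn [sat]. rewrite sat_andset. split.
  - intros H HX. destruct (H HX) as [[j Hj] H2]. split.
    + exists j. now apply sat_andset.
    + intros j0 k Hjk [H3 H4]. apply (H2 (exist _ (j0,k) Hjk)); simpl.
      split; now apply sat_andset.
  - intros H HX. destruct (H HX) as [[j Hj] H2]. split.
    + exists j. now apply sat_andset.
    + intros [[j0 k] Hjk] [H3 H4]; simpl in *. apply (H2 j0 k Hjk).
      split; now apply sat_andset.
Qed.

Lemma sat_form_i {E} (m : E -> Prop) X J (Y : J -> E -> Prop) Z :
  sat m (form_i X Y Z) <-> (subset X m -> (exists j, subset (Y j) m) /\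
     forall j k, j <> k -> ~ (subset (Z j k) m /\ subset (Z k j) m)).
Proof.
  unfold form_i. cbn [sat]. rewrite sat_andset. split.
  - intros H HX. destruct (H HX) as [[j Hj] H2]. split.
    + exists j. now apply sat_andset.
    + intros j0 k Hjk [H3 H4]. apply (H2 (exist _ (j0,k) Hjk)); simpl.
      split; now apply sat_andset.
  - intros H HX. destruct (H HX) as [[j Hj] H2]. split.
    + exists j. now apply sat_andset.
    + intros [[j0 k] Hjk] [H3 H4]; simpl in *. apply (H2 j0 k Hjk).
      split; now apply sat_andset.
Qed.

Lemma sat_form_j {E} (m : E -> Prop) X J (Y : J -> E -> Prop) e :
  sat m (form_j X Y e) <-> ((subset X m -> exists j, subset (Y j) m) /\
     forall j k, j <> k -> ~ (m (e j k) /\ m (e k j))).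
Proof.
  unfold form_j. cbn [sat]. rewrite sat_andset. split.
  - intros [H H2]. split.
    + intros HX. destruct (H HX) as [j Hj]. exists j. now apply sat_andset.
    + intros j0 k Hjk. exact (H2 (exist _ (j0,k) Hjk)).
  - intros [H H2]. split.
    + intros HX. destruct (H HX) as [j Hj]. exists j. now apply sat_andset.
    + intros [[j0 k] Hjk]; simpl. apply (H2 j0 k Hjk).
Qed.

Section Parts.
Variable E : Type.
Variable T : form E -> Prop.

Lemma pa : (forall f, T f -> exists X Y, f = clause X Y /\ nonempty_set X) -> rooted (model T).
Proof.
  intros H f Hf. destruct (H f Hf) as (X&Y&->&[x Hx]). apply sat_clause.
  intros HX. destruct (HX x Hx).
Qed.

Lemma union_one (A : (E -> Prop) -> Prop) X Y f :
  subset A (model T) -> T f -> f = clause X Y -> card_eq1 X ->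
  subset X (bigunion A) -> exists y, Y y /\ bigunion A y.
Proof.
  intros HA Hf -> [a Ha] HX.
  destruct (HX a (proj2 (Ha a) eq_refl)) as [z [Hz Hza]].
  pose proof (HA z Hz _ Hf) as Hs. rewrite sat_clause in Hs.
  destruct Hs as [y [Hy Hzy]].
  - intros x Hx. apply Ha in Hx. subst. exact Hza.
  - exists y. split; [exact Hy | exists z; auto].
Qed.

Lemma pb : (forall f, T f -> exists X Y, f = clause X Y /\ (card_eq1 X \/ empty_set Y)) ->
     closed_bounded_unions (model T).
Proof.
  intros H A HA [w [Hw Hsub]] f Hf.
  destruct (H f Hf) as (X&Y&Hfe&[H1|HY]).
  - subst f. apply sat_clause. intros HX. eapply union_one; eauto.
  - subst f. apply sat_clause. intros HX.
    pose proof (Hw _ Hf) as Hw'. rewrite sat_clause in Hw'.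
    destruct (Hw' (fun x Hx => Hsub x (HX x Hx))) as [y [Hy _]]. destruct (HY y Hy).
Qed.

Lemma pc : (forall f, T f -> exists X Y, f = clause X Y /\ card_le1 Y) ->
     closed_nonempty_intersections (model T).
Proof.
  intros H A [z0 Hz0] HA f Hf. destruct (H f Hf) as (X&Y&->&HY).
  apply sat_clause. intros HX.
  pose proof (HA z0 Hz0 _ Hf) as H0. rewrite sat_clause in H0.
  destruct (H0 (fun x Hx => HX x Hx z0 Hz0)) as [y0 [Hy0 _]].
  exists y0; split; auto. intros z Hz.
  pose proof (HA z Hz _ Hf) as H1. rewrite sat_clause in H1.
  destruct (H1 (fun x Hx => HX x Hx z Hz)) as [y [Hy Hzy]].
  rewrite (HY y0 y Hy0 Hy). exact Hzy.
Qed.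

Lemma pd : (forall f, T f -> exists (X : E -> Prop) (J : Type) (Y : J -> E -> Prop),
       f = form_d X Y) ->
     closed_bounded_nonempty_intersections (model T).
Proof.
  intros H A [z0 Hz0] HA [w [Hw Hsub]] f Hf. destruct (H f Hf) as (X&J&Y&->).
  apply sat_form_d. intros HX.
  pose proof (HA z0 Hz0 _ Hf) as H0. rewrite sat_form_d in H0.
  destruct (H0 (fun x Hx => HX x Hx z0 Hz0)) as [[j0 Hj0] Hp0].
  pose proof (Hw _ Hf) as Hw'. rewrite sat_form_d in Hw'.
  destruct (Hw' (fun x Hx => Hsub x (ex_intro _ z0 (conj Hz0 (HX x Hx z0 Hz0))))) as [_ Hpw].
  assert (key : forall z, A z -> subset (Y j0) z).
  { intros z Hz.
    pose proof (HA z Hz _ Hf) as H1. rewrite sat_form_d in H1.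
    destruct (H1 (fun x Hx => HX x Hx z Hz)) as [[jz Hjz] _].
    destruct (classic (jz = j0)) as [<-|Hne]; [exact Hjz|].
    exfalso. apply (Hpw jz j0 Hne). split.
    - intros x Hx. apply Hsub. exists z. auto.
    - intros x Hx. apply Hsub. exists z0. auto. }
  split.
  - exists j0. intros x Hx z Hz. exact (key z Hz x Hx).
  - intros j k Hjk [H1 H2]. apply (Hp0 j k Hjk). split.
    + intros x Hx. exact (H1 x Hx z0 Hz0).
    + intros x Hx. exact (H2 x Hx z0 Hz0).
Qed.

Lemma pe : (forall f, T f -> exists X Y, f = clause X Y /\ finite_set X) ->
     finite_conflict (model T).
Proof.
  intros H X HX f Hf. destruct (H f Hf) as (X'&Y&->&Hfin).
  apply sat_clause. intros HX'.
  destruct (HX X' HX' Hfin) as (z&Hz&H1&H2).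
  pose proof (Hz _ Hf) as Hs. rewrite sat_clause in Hs.
  destruct (Hs H1) as [y [Hy Hzy]]. exists y. auto.
Qed.

Lemma pf : (forall f, T f -> exists X Y, f = clause X Y /\ card_le2 X) ->
     binary_conflict (model T).
Proof.
  intros H X HX f Hf. destruct (H f Hf) as (X'&Y&->&Hfin).
  apply sat_clause. intros HX'.
  destruct (HX X' HX' Hfin) as (z&Hz&H1&H2).
  pose proof (Hz _ Hf) as Hs. rewrite sat_clause in Hs.
  destruct (Hs H1) as [y [Hy Hzy]]. exists y. auto.
Qed.

Lemma pg : (forall f, T f -> exists X Y, f = clause X Y /\
       (card_eq1 X \/ (finite_set X /\ empty_set Y))) ->
     closed_fin_consistent_unions (model T).
Proof.
  intros H A HA Hfc f Hf.
  destruct (H f Hf) as (X&Y&Hfe&[H1|[Hfin HY]]).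
  - subst f. apply sat_clause. intros HX. eapply union_one; eauto.
  - subst f. apply sat_clause. intros HX.
    destruct (Hfc X HX Hfin) as [w [Hw Hsub]].
    pose proof (Hw _ Hf) as Hw'. rewrite sat_clause in Hw'.
    destruct (Hw' Hsub) as [y [Hy _]]. destruct (HY y Hy).
Qed.

Lemma ph : (forall f, T f -> exists X Y, f = clause X Y /\
       (card_eq1 X \/ (card_le2 X /\ empty_set Y))) ->
     closed_pair_consistent_unions (model T).
Proof.
  intros H A HA Hfc f Hf.
  destruct (H f Hf) as (X&Y&Hfe&[H1|[Hfin HY]]).
  - subst f. apply sat_clause. intros HX. eapply union_one; eauto.
  - subst f. apply sat_clause. intros HX.
    destruct (Hfc X HX Hfin) as [w [Hw Hsub]].
    pose proof (Hw _ Hf) as Hw'. rewrite sat_clause in Hw'.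
    destruct (Hw' Hsub) as [y [Hy _]]. destruct (HY y Hy).
Qed.

Lemma pi : (forall f, T f -> exists (X : E -> Prop) (J : Type) (Y : J -> E -> Prop)
       (Z : J -> J -> E -> Prop),
       f = form_i X Y Z /\ finite_set X /\
       (forall j k, j <> k -> subset (Z j k) (Y j) /\ finite_set (Z j k))) ->
     closed_fin_consistent_nonempty_intersections (model T).
Proof.
  intros H A [z0 Hz0] HA Hfc f Hf. destruct (H f Hf) as (X&J&Y&Z&->&HXfin&HZ).
  apply sat_form_i. intros HX.
  pose proof (HA z0 Hz0 _ Hf) as H0. rewrite sat_form_i in H0.
  destruct (H0 (fun x Hx => HX x Hx z0 Hz0)) as [[j0 Hj0] Hp0].
  assert (key : forall z, A z -> subset (Y j0) z).
  { intros z Hz.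
    pose proof (HA z Hz _ Hf) as H1. rewrite sat_form_i in H1.
    destruct (H1 (fun x Hx => HX x Hx z Hz)) as [[jz Hjz] _].
    destruct (classic (jz = j0)) as [<-|Hne]; [exact Hjz|].
    exfalso.
    destruct (HZ jz j0 Hne) as [S1 [l2 F2]].
    destruct (HZ j0 jz (fun e => Hne (eq_sym e))) as [S2 [l3 F3]].
    destruct HXfin as [l1 F1].
    set (S := fun x => X x \/ Z jz j0 x \/ Z j0 jz x).
    destruct (Hfc S) as [w [Hw Hsub]].
    - intros x [Hx|[Hx|Hx]].
      + exists z0. split; auto. exact (HX x Hx z0 Hz0).
      + exists z. split; auto.
      + exists z0. split; auto.
    - exists (l1 ++ l2 ++ l3). intros x [Hx|[Hx|Hx]]; rewrite !in_app_iff; auto.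
    - pose proof (Hw _ Hf) as Hw'. rewrite sat_form_i in Hw'.
      destruct (Hw' (fun x Hx => Hsub x (or_introl Hx))) as [_ Hpw].
      apply (Hpw jz j0 Hne). split.
      + intros x Hx. apply Hsub. right; left; exact Hx.
      + intros x Hx. apply Hsub. right; right; exact Hx. }
  split.
  - exists j0. intros x Hx z Hz. exact (key z Hz x Hx).
  - intros j k Hjk [H1 H2]. apply (Hp0 j k Hjk). split.
    + intros x Hx. exact (H1 x Hx z0 Hz0).
    + intros x Hx. exact (H2 x Hx z0 Hz0).
Qed.

Lemma pj : (forall f, T f -> exists (X : E -> Prop) (J : Type) (Y : J -> E -> Prop)
       (e : J -> J -> E),
       f = form_j X Y e /\ card_le2 X /\ (forall j k, j <> k -> Y j (e j k))) ->
     closed_pair_consistent_nonempty_intersections (model T).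
Proof.
  intros H A [z0 Hz0] HA Hfc f Hf. destruct (H f Hf) as (X&J&Y&e&->&_&HY).
  pose proof (HA z0 Hz0 _ Hf) as H0. rewrite sat_form_j in H0.
  destruct H0 as [H0 Hp0].
  apply sat_form_j. split.
  - intros HX.
    destruct (H0 (fun x Hx => HX x Hx z0 Hz0)) as [j0 Hj0].
    exists j0. intros x Hx z Hz.
    pose proof (HA z Hz _ Hf) as H1. rewrite sat_form_j in H1.
    destruct H1 as [H1 _].
    destruct (H1 (fun x Hx => HX x Hx z Hz)) as [jz Hjz].
    destruct (classic (jz = j0)) as [<-|Hne]; [exact (Hjz x Hx)|].
    exfalso.
    set (S := fun x => x = e jz j0 \/ x = e j0 jz).
    destruct (Hfc S) as [w [Hw Hsub]].
    + intros y [->| ->].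
      * exists z. split; [exact Hz|]. apply Hjz. apply HY. exact Hne.
      * exists z0. split; [exact Hz0|]. apply Hj0. apply HY. intro E'. apply Hne. auto.
    + exists (e jz j0), (e j0 jz). intros y Hy. exact Hy.
    + pose proof (Hw _ Hf) as Hw'. rewrite sat_form_j in Hw'.
      destruct Hw' as [_ Hpw]. apply (Hpw jz j0 Hne). split; apply Hsub; unfold S; auto.
  - intros j k Hjk [H1 H2]. apply (Hp0 j k Hjk). split; [apply H1|apply H2]; exact Hz0.
Qed.
End Parts.

Theorem mainTheorem13 (E : Type) (T : form E -> Prop) :
  (* (a) *)
  ((forall f, T f -> exists X Y, f = clause X Y /\ nonempty_set X) ->
     rooted (model T)) /\
  (* (b) *)
  ((forall f, T f -> exists X Y, f = clause X Y /\ (card_eq1 X \/ empty_set Y)) ->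
     closed_bounded_unions (model T)) /\
  (* (c) *)
  ((forall f, T f -> exists X Y, f = clause X Y /\ card_le1 Y) ->
     closed_nonempty_intersections (model T)) /\
  (* (d) *)
  ((forall f, T f -> exists (X : E -> Prop) (J : Type) (Y : J -> E -> Prop),
       f = form_d X Y) ->
     closed_bounded_nonempty_intersections (model T)) /\
  (* (e) *)
  ((forall f, T f -> exists X Y, f = clause X Y /\ finite_set X) ->
     finite_conflict (model T)) /\
  (* (f) *)
  ((forall f, T f -> exists X Y, f = clause X Y /\ card_le2 X) ->
     binary_conflict (model T)) /\
  (* (g) *)
  ((forall f, T f -> exists X Y, f = clause X Y /\
       (card_eq1 X \/ (finite_set X /\ empty_set Y))) ->
     closed_fin_consistent_unions (model T)) /\
  (* (h) *)
  ((forall f, T f -> exists X Y, f = clause X Y /\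
       (card_eq1 X \/ (card_le2 X /\ empty_set Y))) ->
     closed_pair_consistent_unions (model T)) /\
  (* (i) *)
  ((forall f, T f -> exists (X : E -> Prop) (J : Type) (Y : J -> E -> Prop)
       (Z : J -> J -> E -> Prop),
       f = form_i X Y Z /\ finite_set X /\
       (forall j k, j <> k -> subset (Z j k) (Y j) /\ finite_set (Z j k))) ->
     closed_fin_consistent_nonempty_intersections (model T)) /\
  (* (j) *)
  ((forall f, T f -> exists (X : E -> Prop) (J : Type) (Y : J -> E -> Prop)
       (e : J -> J -> E),
       f = form_j X Y e /\ card_le2 X /\ (forall j k, j <> k -> Y j (e j k))) ->
     closed_pair_consistent_nonempty_intersections (model T)).
Proof.
  split; [apply pa|]. split; [apply pb|]. split; [apply pc|]. split; [apply pd|]. split; [apply pe|].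
  split; [apply pf|]. split; [apply pg|]. split; [apply ph|]. split; [apply pi|]. apply pj.
Qed.
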